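(* Every function $g$ in the Zygmund class $\Lambda_*$ has locally finite $\Phi_q$-variation for every $q>1/2$.
   Context: The Zygmund class $\Lambda_*$ consists of continuous $g\colon\mathbb{R}\to\mathbb{R}$ for which there is $M>0$ with $|g(x+h)-2g(x)+g(x-h)|\le 2Mh$ for all $x\in\mathbb{R}$, $h>0$. For $q>0$, $\Phi_q\colon[0,\infty)\to[0,\infty)$ is any convex increasing function with $\Phi_q(t)=t/(\log(1/t))^q$ for small $t>0$. A function $v\colon\mathbb{R}\to\mathbb{R}$ has locally finite $\Phi$-variation if for every bounded interval $[a,b]$, $\sup\sum_{j=1}^N\Phi(|v(x_j)-v(x_{j-1})|)<\infty$ over all partitions $a=x_0<\dots<x_N=b$, $N\ge1$. *)

(* Defs.v *)
From Stdlib Require Import Reals Lra.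
Open Scope R_scope.

Definition zygmund (g : R -> R) : Prop :=
  continuity g /\
  exists M : R, M > 0 /\
    forall x h : R, h > 0 ->
      Rabs (g (x + h) - 2 * g x + g (x - h)) <= 2 * M * h.

Definition is_Phi_q (q : R) (Phi : R -> R) : Prop :=
  (forall t, 0 <= t -> 0 <= Phi t) /\
  (forall s t, 0 <= s -> s <= t -> Phi s <= Phi t) /\
  (forall x y l, 0 <= x -> 0 <= y -> 0 <= l <= 1 ->
     Phi (l * x + (1 - l) * y) <= l * Phi x + (1 - l) * Phi y) /\
  (exists delta, 0 < delta < 1 /\
     forall t, 0 < t < delta -> Phi t = t / Rpower (ln (1 / t)) q).

Definition is_partition (a b : R) (N : nat) (x : nat -> R) : Prop :=
  (1 <= N)%nat /\ x 0%nat = a /\ x N = b /\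
  (forall j, (j < N)%nat -> x j < x (S j)).

Definition Phi_var_sum (Phi v : R -> R) (N : nat) (x : nat -> R) : R :=
  sum_f_R0 (fun j => Phi (Rabs (v (x (S j)) - v (x j)))) (N - 1).

Definition loc_finite_Phi_variation (Phi v : R -> R) : Prop :=
  forall a b : R, a < b ->
    exists C : R, forall (N : nat) (x : nat -> R),
      is_partition a b N x -> Phi_var_sum Phi v N x <= C.

(* Main.v *)
Require Import Defs.
From Stdlib Require Import Reals Lra Lia Psatz ZArith List ClassicalEpsilon.
Import ListNotations.
Open Scope R_scope.

Lemma exp_le_inv_bound (z : R) : z < 1 -> exp z * (1 - z) <= 1.
Proof.
  intro Hz. pose proof (exp_ineq1_le (- z)) as H.
  rewrite exp_Ropp in H.
  assert (Hp := exp_pos z).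
  apply Rmult_le_compat_l with (r := exp z) in H; [|lra].
  rewrite Rmult_comm in H. field_simplify in H; [|lra].
  nra.
Qed.

Lemma cosh_bound (z : R) : exp z + exp (- z) <= 2 * exp (2 * (z * z)).
Proof.
  destruct (Rle_or_lt (z*z) (1/2)) as [H|H].
  - assert (Hz1 : z < 1) by nra. assert (Hz2 : -z < 1) by nra.
    pose proof (exp_le_inv_bound z Hz1). pose proof (exp_le_inv_bound (-z) Hz2).
    pose proof (exp_ineq1_le (2*(z*z))).
    assert (exp z <= / (1 - z)).
    { apply (Rmult_le_reg_r (1 - z)); [lra|]. rewrite Rinv_l; lra. }
    assert (exp (-z) <= / (1 + z)).
    { apply (Rmult_le_reg_r (1 + z)); [lra|]. rewrite Rinv_l; lra. }
    assert (/ (1 - z) + / (1 + z) <= 2 * (1 + 2*(z*z))).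
    { assert (/ (1 - z) + / (1 + z) = 2 / (1 - z*z)) by (field; split; lra).
      rewrite H5. apply (Rmult_le_reg_r (1 - z*z)); [lra|].
      unfold Rdiv. rewrite Rmult_assoc, Rinv_l; [|lra]. nra. }
    lra.
  - assert (z <= 2*(z*z)) by nra. assert (-z <= 2*(z*z)) by nra.
    assert (exp z <= exp (2*(z*z))).
    { destruct (Req_dec z (2*(z*z))) as [E|E]; [rewrite <- E; lra|].
      left; apply exp_increasing; lra. }
    assert (exp (-z) <= exp (2*(z*z))).
    { destruct (Req_dec (-z) (2*(z*z))) as [E|E]; [rewrite <- E; lra|].
      left; apply exp_increasing; lra. }
    lra.
Qed.

Lemma exp_le (x y : R) : x <= y -> exp x <= exp y.
Proof. intro H; destruct (Req_dec x y) as [E|E]; [subst; lra|]. left; apply exp_increasing; lra. Qed.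

Lemma ln_le_sub1 (x : R) : 0 < x -> ln x <= x - 1.
Proof. intro H. pose proof (exp_ineq1_le (ln x)). rewrite exp_ln in H0; lra. Qed.

Definition Ef (mu lam tau s : R) : R := exp (mu * (s*s) / tau - lam * ln tau).

Lemma Ef_super (mu lam M tau s d : R) :
  0 <= mu -> 8 * mu * (M*M) <= 1 -> mu * (M*M) <= lam -> 1 <= tau -> Rabs d <= M ->
  Ef mu lam (tau + 1) (s + d) + Ef mu lam (tau + 1) (s - d) <= 2 * Ef mu lam tau s.
Proof.
  intros Hmu HM Hl Ht Hd. unfold Ef.
  set (t' := tau + 1).
  set (A := mu * (s*s + d*d) / t' - lam * ln t').
  set (z := 2 * mu * s * d / t').
  assert (E1 : mu * ((s + d) * (s + d)) / t' - lam * ln t' = A + z) by (unfold A, z; field; unfold t'; lra).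
  assert (E2 : mu * ((s - d) * (s - d)) / t' - lam * ln t' = A + - z) by (unfold A, z; field; unfold t'; lra).
  rewrite E1, E2, !exp_plus.
  pose proof (cosh_bound z) as Hc.
  assert (Hpos := exp_pos A).
  assert (exp A * exp z + exp A * exp (- z) <= 2 * exp (A + 2*(z*z))).
  { rewrite exp_plus. nra. }
  eapply Rle_trans; [exact H|]. apply Rmult_le_compat_l; [lra|]. apply exp_le.
  assert (Hln : ln tau = ln t' + ln (tau / t')).
  { rewrite <- ln_mult; [|unfold t'; lra| apply Rdiv_lt_0_compat; unfold t'; lra].
    f_equal. field. unfold t'; lra. }
  pose proof (ln_le_sub1 (tau / t')) as Hls.
  assert (0 < tau / t') by (apply Rdiv_lt_0_compat; unfold t'; lra).
  specialize (Hls H0).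
  assert (Hq : tau / t' - 1 = - / t') by (unfold t'; field; lra).
  rewrite Hq in Hls.
  assert (Hdd : d * d <= M * M).
  { assert (Rabs d * Rabs d <= M * M) by (apply Rmult_le_compat; try apply Rabs_pos; lra).
    rewrite <- Rabs_mult, Rabs_pos_eq in H1 by nra. lra. }
  rewrite Hln. unfold A, z.
  set (r := / tau). set (r' := / t').
  assert (Hr : 0 < r) by (unfold r; apply Rinv_0_lt_compat; lra).
  assert (Hr' : 0 < r') by (unfold r', t'; apply Rinv_0_lt_compat; lra).
  assert (Hrr : r - r' = r * r') by (unfold r, r', t'; field; lra).
  assert (Hr1 : r <= 1) by (unfold r; rewrite <- Rinv_1; apply Rinv_le_contravar; lra).
  replace (mu * (s * s + d * d) / t') with (mu * (s*s) * r' + mu * (d*d) * r') by (unfold r'; field; unfold t'; lra).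
  replace (2 * mu * s * d / t') with (2 * mu * s * d * r') by (unfold r'; field; unfold t'; lra).
  replace (mu * (s*s) / tau) with (mu * (s*s) * r) by (unfold r; field; lra).
  fold r' in Hls.
  assert (T1 : mu * (d*d) * r' <= lam * r').
  { apply Rmult_le_compat_r; [lra|]. nra. }
  assert (T2 : 2 * (2 * mu * s * d * r' * (2 * mu * s * d * r')) <= mu * (s*s) * (r * r')).
  { assert (8 * mu * (d*d) <= 1) by nra.
    assert (r' <= r) by (assert (0 < r*r') by (apply Rmult_lt_0_compat; lra); lra).
    assert (0 <= mu * (s*s) * r') by (apply Rmult_le_pos; [apply Rmult_le_pos; nra|lra]).
    replace (2 * (2 * mu * s * d * r' * (2 * mu * s * d * r'))) with ((mu * (s*s) * r') * ((8 * mu * (d*d)) * r')) by ring.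
    replace (mu * (s*s) * (r * r')) with ((mu * (s*s) * r') * r) by ring.
    apply Rmult_le_compat_l; [lra|]. nra. }
  assert (0 <= lam) by (assert (0 <= mu * (M*M)) by (apply Rmult_le_pos; nra); lra).
  assert (lam * r' <= - lam * ln (tau / t')) by (replace (- lam * ln (tau / t')) with (lam * (- ln (tau/t'))) by ring; apply Rmult_le_compat_l; lra).
  assert (mu*(s*s)*r - mu*(s*s)*r' = mu*(s*s)*(r*r')) by (rewrite <- Hrr; ring).
  lra.
Qed.

Definition Hg (h : R -> R) (a u : R) (i : nat) : R := h (a + INR i * u).
Definition Sl (h : R -> R) (a u : R) (e c : nat) : R :=
  (Hg h a u ((c+1)*2^e) - Hg h a u (c*2^e)) / (2^e * u).
Definition ZG (h : R -> R) (a u M : R) : Prop :=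
  forall i k : nat, Rabs (Hg h a u (i + 2*k) - 2 * Hg h a u (i+k) + Hg h a u i) <= 2 * M * INR k * u.

Lemma pow2_pos (e : nat) : 0 < 2 ^ e.
Proof. apply pow_lt; lra. Qed.

Lemma INR_pow2 (e : nat) : INR (2^e) = 2 ^ e.
Proof. rewrite pow_INR. reflexivity. Qed.

Lemma adj_slope h a u M e c : 0 < u -> ZG h a u M ->
  Rabs (Sl h a u e (S c) - Sl h a u e c) <= 2 * M.
Proof.
  intros Hu HZ. unfold Sl.
  specialize (HZ (c * 2^e)%nat (2^e)%nat).
  replace (c * 2 ^ e + 2 * 2 ^ e)%nat with ((S c + 1) * 2^e)%nat in HZ by lia.
  replace (c * 2 ^ e + 2 ^ e)%nat with ((c + 1) * 2^e)%nat in HZ by lia.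
  replace (S c * 2^e)%nat with ((c + 1) * 2^e)%nat by lia.
  rewrite INR_pow2 in HZ.
  pose proof (pow2_pos e).
  set (A := Hg h a u ((S c + 1) * 2 ^ e)) in *.
  set (B := Hg h a u ((c + 1) * 2 ^ e)) in *.
  set (C := Hg h a u (c * 2 ^ e)) in *.
  replace ((A - B) / (2 ^ e * u) - (B - C) / (2 ^ e * u)) with ((A - 2 * B + C) / (2^e * u)) by (field; lra).
  unfold Rdiv. rewrite Rabs_mult, Rabs_inv, (Rabs_pos_eq (2^e*u)) by nra.
  apply (Rmult_le_reg_r (2^e*u)); [nra|]. rewrite Rmult_assoc, Rinv_l by nra. nra.
Qed.

Lemma split_slope h a u e c : 0 < u ->
  Sl h a u (S e) c = (Sl h a u e (2*c) + Sl h a u e (2*c+1)) / 2.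
Proof.
  intros Hu. unfold Sl.
  replace ((c + 1) * 2 ^ S e)%nat with ((2*c+1 + 1) * 2^e)%nat by (simpl; lia).
  replace ((c) * 2 ^ S e)%nat with ((2*c) * 2^e)%nat by (simpl; lia).
  pose proof (pow2_pos e). simpl pow. field. lra.
Qed.

Lemma children_bound h a u M e c : 0 < u -> ZG h a u M ->
  Rabs (Sl h a u e (2*c)) + Rabs (Sl h a u e (2*c+1)) <= 2 * Rabs (Sl h a u (S e) c) + 2 * M /\
  Rabs (Sl h a u e (2*c)) <= Rabs (Sl h a u (S e) c) + M /\
  Rabs (Sl h a u e (2*c+1)) <= Rabs (Sl h a u (S e) c) + M.
Proof.
  intros Hu HZ. rewrite (split_slope h a u e c Hu).
  pose proof (adj_slope h a u M e (2*c) Hu HZ) as H.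
  replace (S (2*c)) with (2*c+1)%nat in H by lia.
  set (x := Sl h a u e (2*c)) in *. set (y := Sl h a u e (2*c+1)) in *.
  apply Rabs_le in H as [H1 H2] || (apply Rabs_def2b in H) || idtac.
  revert H. unfold Rabs; repeat destruct Rcase_abs; intros; repeat split; lra.
Qed.

Lemma Hg_diff_slope h a u e c : 0 < u ->
  Hg h a u ((c+1)*2^e) - Hg h a u (c*2^e) = 2^e * u * Sl h a u e c.
Proof. intros Hu. unfold Sl. pose proof (pow2_pos e). field. nra. Qed.

Lemma osc h a u M e : 0 < u -> 0 <= M -> ZG h a u M -> forall c i,
  (c * 2^e <= i <= (c+1) * 2^e)%nat ->
  Rabs (Hg h a u i - Hg h a u (c * 2^e)) <= 2^e * u * (Rabs (Sl h a u e c) + 2 * M).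
Proof.
  intros Hu HM HZ. induction e as [|e IH]; intros c i Hi.
  - simpl in Hi. simpl pow.
    assert (i = c * 1 \/ i = (c+1)*1)%nat as [->| ->] by lia.
    + unfold Rminus. rewrite Rplus_opp_r, Rabs_R0.
      apply Rmult_le_pos; [lra|]. pose proof (Rabs_pos (Sl h a u 0 c)). lra.
    + pose proof (Hg_diff_slope h a u 0 c Hu) as E. change (2^0)%nat with 1%nat in E. simpl pow in E. change (2^0)%nat with 1%nat. rewrite E.
      rewrite Rabs_mult, (Rabs_pos_eq (1*u)) by lra. pose proof (Rabs_pos (Sl h a u 0 c)). nra.
  - pose proof (children_bound h a u M e c Hu HZ) as [Hcb1 [Hcb2 Hcb3]].
    pose proof (pow2_pos e) as Hp.
    replace (c * 2^S e)%nat with ((2*c) * 2^e)%nat by (simpl; lia).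
    replace (2 ^ S e) with (2 * 2^e) by reflexivity.
    destruct (Nat.le_gt_cases i ((2*c+1)*2^e)) as [Hle|Hgt].
    + assert (Hi' : ((2*c) * 2^e <= i <= (2*c+1) * 2^e)%nat) by (simpl in Hi; lia).
      specialize (IH (2*c)%nat i Hi').
      eapply Rle_trans; [exact IH|].
      assert (0 <= 2^e * u) by nra.
      pose proof (Rabs_pos (Sl h a u (S e) c)).
      nra.
    + assert (Hi' : ((2*c+1) * 2^e <= i <= (2*c+1+1) * 2^e)%nat) by (simpl in Hi; lia).
      specialize (IH (2*c+1)%nat i Hi').
      pose proof (Hg_diff_slope h a u e (2*c) Hu) as E.
      replace (Hg h a u i - Hg h a u (2 * c * 2 ^ e)) with
        ((Hg h a u i - Hg h a u ((2*c+1) * 2^e)) + (Hg h a u ((2*c+1)*2^e) - Hg h a u (2 * c * 2 ^ e))) by ring.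
      eapply Rle_trans; [apply Rabs_triang|].
      rewrite E, Rabs_mult, (Rabs_pos_eq (2^e*u)) by nra.
      assert (0 <= 2^e * u) by nra.
      nra.
Qed.

Lemma drift h a u M e c : 0 < u -> ZG h a u M -> forall r,
  Rabs (Sl h a u e (c + r)) <= Rabs (Sl h a u e c) + 2 * M * INR r.
Proof.
  intros Hu HZ. induction r as [|r IH].
  - rewrite Nat.add_0_r. simpl. lra.
  - pose proof (adj_slope h a u M e (c + r) Hu HZ) as H.
    replace (c + S r)%nat with (S (c + r)) by lia. rewrite S_INR.
    pose proof (Rabs_triang_inv (Sl h a u e (S (c + r))) (Sl h a u e (c + r))). lra.
Qed.

Lemma multi h a u M e c : 0 < u -> 0 <= M -> ZG h a u M -> forall r i,
  (c * 2^e <= i <= (c + S r) * 2^e)%nat ->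
  Rabs (Hg h a u i - Hg h a u (c * 2^e)) <=
    INR (S r) * 2^e * u * (Rabs (Sl h a u e c) + 2 * M * INR (S r) + 2 * M).
Proof.
  intros Hu HM HZ. pose proof (pow2_pos e) as Hp.
  assert (Hpu : 0 <= 2^e * u) by nra.
  pose proof (Rabs_pos (Sl h a u e c)) as Hs.
  induction r as [|r IH]; intros i Hi.
  - replace (c + 1)%nat with (c+1)%nat in Hi by lia.
    pose proof (osc h a u M e Hu HM HZ c i Hi). simpl INR. nra.
  - destruct (Nat.le_gt_cases i ((c + S r) * 2^e)) as [Hle|Hgt].
    + specialize (IH i ltac:(lia)).
      eapply Rle_trans; [exact IH|].
      rewrite (S_INR (S r)). pose proof (pos_INR (S r)).
      set (m := 2^e * u) in *. set (R1 := INR (S r)) in *. set (s := Rabs (Sl h a u e c)) in *.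
      assert (0 <= m * (s + 2 * M * R1 + 2 * M)) by (apply Rmult_le_pos; nra).
      assert (R1 * m * (s + 2 * M * R1 + 2 * M) <= R1 * m * (s + 2 * M * (R1+1) + 2 * M)).
      { apply Rmult_le_compat_l; [nra|lra]. }
      assert (0 <= m * (s + 2 * M * (R1+1) + 2 * M)) by (apply Rmult_le_pos; nra).
      replace (R1 * 2 ^ e * u) with (R1 * m) by (unfold m; ring). replace ((R1 + 1) * 2 ^ e * u) with (R1*m + m) by (unfold m; ring). nra.
    + assert (Hi' : ((c + S r) * 2^e <= i <= (c + S r + 1) * 2^e)%nat) by lia.
      pose proof (osc h a u M e Hu HM HZ (c + S r) i Hi') as H1.
      pose proof (drift h a u M e c Hu HZ (S r)) as H2.
      specialize (IH ((c + S r) * 2^e)%nat ltac:(split; [apply Nat.mul_le_mono_r; lia | lia])) as H3.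
      replace (Hg h a u i - Hg h a u (c * 2 ^ e)) with
        ((Hg h a u i - Hg h a u ((c + S r) * 2^e)) + (Hg h a u ((c + S r) * 2^e) - Hg h a u (c * 2 ^ e))) by ring.
      eapply Rle_trans; [apply Rabs_triang|].
      rewrite (S_INR (S r)). pose proof (pos_INR (S r)).
      set (s := Rabs (Sl h a u e c)) in *. set (t := Rabs (Sl h a u e (c + S r))) in *.
      set (m := 2^e * u) in *. set (R1 := INR (S r)) in *.
      assert (m * (t + 2*M) <= m * (s + 2 * M * R1 + 2 * M)) by (apply Rmult_le_compat_l; lra).
      assert (R1 * m * (s + 2 * M * R1 + 2 * M) <= R1 * m * (s + 2 * M * (R1+1) + 2 * M)).
      { apply Rmult_le_compat_l; [nra|lra]. }
      replace (R1 * 2 ^ e * u) with (R1 * m) in H3 by (unfold m; ring). replace ((R1 + 1) * 2 ^ e * u) with (R1*m + m) by (unfold m; ring). assert (0 <= m * (s + 2 * M * (R1 + 1) + 2 * M)) by (apply Rmult_le_pos; nra). nra.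
Qed.

Lemma Jbound h a u M : 0 < u -> 0 <= M -> ZG h a u M -> forall al be : nat,
  (al < be)%nat -> exists e c, (al <= c * 2^e)%nat /\ ((c+1) * 2^e <= be)%nat /\
  Rabs (Hg h a u be - Hg h a u al) <= 10 * 2^e * u * (Rabs (Sl h a u e c) + 14 * M).
Proof.
  intros Hu HM HZ al be Hab.
  destruct (Nat.eq_dec be (S al)) as [->|Hne].
  - exists 0%nat, al. change (2^0)%nat with 1%nat. split; [lia|split; [lia|]].
    pose proof (Hg_diff_slope h a u 0 al Hu) as E. change (2^0)%nat with 1%nat in E.
    replace ((al+1)*1)%nat with (S al) in E by lia. replace (al * 1)%nat with al in E by lia.
    rewrite E. simpl pow. rewrite Rabs_mult, (Rabs_pos_eq (1*u)) by lra.
    pose proof (Rabs_pos (Sl h a u 0 al)). nra.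
  - set (n := ((be - al) / 2)%nat).
    assert (Hn : (0 < n)%nat) by (unfold n; apply Nat.div_str_pos; lia).
    pose proof (Nat.log2_spec n Hn) as [Hl1 Hl2].
    set (e := Nat.log2 n) in *.
    assert (Hn2 : (2 * n <= be - al <= 2 * n + 1)%nat).
    { pose proof (Nat.div_mod (be - al) 2 ltac:(lia)). pose proof (Nat.mod_upper_bound (be - al) 2 ltac:(lia)).
      unfold n. lia. }
    rewrite Nat.pow_succ_r' in Hl2.
    set (m := (2^e)%nat) in *.
    set (c0 := (al / m)%nat).
    assert (Hm0 : (0 < m)%nat) by (unfold m; apply Nat.neq_0_lt_0, Nat.pow_nonzero; lia).
    pose proof (Nat.div_mod al m ltac:(lia)) as Hdm. pose proof (Nat.mod_upper_bound al m ltac:(lia)) as Hmu.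
    fold c0 in Hdm.
    set (P := (m * c0)%nat) in *.
    assert (E1 : (c0 * m = P)%nat) by (unfold P; lia).
    assert (E2 : ((c0 + 1) * m = P + m)%nat) by (unfold P; lia).
    assert (E3 : ((c0 + 1 + 1) * m = P + 2 * m)%nat) by (unfold P; lia).
    assert (E4 : ((c0 + 5) * m = P + 5 * m)%nat) by (unfold P; lia).
    exists e, (c0 + 1)%nat. fold m. rewrite E2, E3. split; [lia|split; [lia|]].
    pose proof (multi h a u M e c0 Hu HM HZ 4 al) as H1. pose proof (multi h a u M e c0 Hu HM HZ 4 be) as H2.
    fold m in H1, H2. rewrite E1 in H1, H2. replace (c0 + 5)%nat with (c0 + 5)%nat in H1 by lia.
    replace (c0 + S 4)%nat with (c0 + 5)%nat in H1, H2 by lia. rewrite E4 in H1, H2.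
    specialize (H1 ltac:(lia)). specialize (H2 ltac:(lia)).
    pose proof (adj_slope h a u M e c0 Hu HZ) as H3. replace (S c0) with (c0 + 1)%nat in H3 by lia.
    pose proof (Rabs_triang_inv (Sl h a u e c0) (Sl h a u e (c0 + 1))) as H4. rewrite Rabs_minus_sym in H4.
    replace (Hg h a u be - Hg h a u al) with ((Hg h a u be - Hg h a u P) - (Hg h a u al - Hg h a u P)) by ring.
    eapply Rle_trans; [apply Rabs_triang|]. rewrite Rabs_Ropp.
    pose proof (pow2_pos e). assert (0 <= 2^e * u) by nra.
    replace (INR (S 4)) with 5 in H1, H2 by (simpl; lra).
    set (s0 := Rabs (Sl h a u e c0)) in *. set (s1 := Rabs (Sl h a u e (c0+1))) in *.
    set (w := 2^e * u) in *.
    replace (5 * 2 ^ e * u) with (5 * w) in H1, H2 by (unfold w; ring).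
    replace (10 * 2 ^ e * u) with (10 * w) by (unfold w; ring).
    assert (s0 <= s1 + 2 * M) by lra.
    assert (w * s0 <= w * (s1 + 2 * M)) by (apply Rmult_le_compat_l; lra).
    nra.
Qed.

Lemma reach h a u M : 0 < u -> ZG h a u M -> forall d e c,
  (c + 1 <= 2^d)%nat -> Rabs (Sl h a u e c) <= Rabs (Sl h a u (e + d) 0) + M * INR d.
Proof.
  intros Hu HZ. induction d as [|d IH]; intros e c Hc.
  - simpl in Hc. assert (c = 0%nat) by lia. subst. rewrite Nat.add_0_r. simpl. lra.
  - rewrite Nat.pow_succ_r' in Hc.
    destruct (Nat.Even_or_Odd c) as [[c' ->]|[c' ->]].
    + pose proof (children_bound h a u M e c' Hu HZ) as [_ [Hb _]].
      specialize (IH (S e) c' ltac:(lia)). replace (S e + d)%nat with (e + S d)%nat in IH by lia.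
      rewrite S_INR. lra.
    + pose proof (children_bound h a u M e c' Hu HZ) as [_ [_ Hb]].
      specialize (IH (S e) c' ltac:(lia)). replace (S e + d)%nat with (e + S d)%nat in IH by lia.
      rewrite S_INR. lra.
Qed.

Fixpoint chain (lo hi : nat) (l : list (nat*nat)) : Prop :=
  match l with
  | nil => True
  | (e,c)::t => (lo <= c*2^e)%nat /\ ((c+1)*2^e <= hi)%nat /\ chain ((c+1)*2^e) hi t
  end.

Fixpoint wsum (W : nat -> nat -> R) (l : list (nat*nat)) : R :=
  match l with nil => 0 | (e,c)::t => W e c + wsum W t end.

Lemma wsum_app W l1 l2 : wsum W (l1 ++ l2) = wsum W l1 + wsum W l2.
Proof. induction l1 as [|[e c] t IH]; simpl; [lra|rewrite IH; lra]. Qed.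

Lemma pow2_pos_nat e : (0 < 2^e)%nat.
Proof. apply Nat.neq_0_lt_0, Nat.pow_nonzero; lia. Qed.

Lemma chain_nil hi t : chain hi hi t -> t = nil.
Proof.
  destruct t as [|[e c] t]; simpl; auto. intros [H1 [H2 _]].
  pose proof (pow2_pos_nat e). nia.
Qed.

Lemma chain_forall lo hi l : chain lo hi l ->
  Forall (fun p => (lo <= snd p * 2^(fst p))%nat /\ ((snd p + 1) * 2^(fst p) <= hi)%nat) l.
Proof.
  revert lo. induction l as [|[e c] t IH]; intros lo H; simpl in *; constructor.
  - simpl; lia.
  - destruct H as [H1 [H2 H3]]. specialize (IH _ H3).
    eapply Forall_impl; [|exact IH]. simpl. intros [e' c'] [A B]. simpl in *.
    pose proof (pow2_pos_nat e). split; [nia|lia].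
Qed.

Lemma node_len lo hi c r : (lo <= c*r)%nat -> ((c+1)*r <= hi)%nat -> (lo + r <= hi)%nat.
Proof. intros H1 H2. rewrite Nat.mul_add_distr_r, Nat.mul_1_l in H2. lia. Qed.

Lemma fit_dyadic e e1 c k : (e <= e1)%nat -> (c * 2^e < k * 2^e1)%nat -> ((c+1) * 2^e <= k * 2^e1)%nat.
Proof.
  intros He Hl. replace e1 with (e + (e1 - e))%nat in * by lia.
  rewrite Nat.pow_add_r in *. pose proof (pow2_pos_nat e). pose proof (pow2_pos_nat (e1 - e)).
  set (p := (2^e)%nat) in *. set (q := (2^(e1-e))%nat) in *.
  assert (c < k * q)%nat by nia. nia.
Qed.

Lemma chain_split e1 mid hi : forall l lo,
  (exists k, mid = k * 2^e1)%nat ->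
  Forall (fun p => (fst p <= e1)%nat) l ->
  chain lo hi l -> (lo <= mid)%nat ->
  exists l1 l2, l = l1 ++ l2 /\ chain lo mid l1 /\ chain mid hi l2.
Proof.
  induction l as [|[e c] t IH]; intros lo [k Hk] HF Hc Hlo.
  - exists nil, nil. simpl. auto.
  - inversion HF as [|x y He HF']; subst. simpl in He. simpl in Hc. destruct Hc as [H1 [H2 H3]].
    destruct (Nat.lt_ge_cases (c * 2^e) (k * 2^e1)) as [Hlt|Hge].
    + pose proof (fit_dyadic e e1 c k He Hlt) as Hfit.
      destruct (IH ((c+1)*2^e)%nat (ex_intro _ k eq_refl) HF' H3 Hfit) as [l1 [l2 [E [C1 C2]]]].
      exists ((e,c)::l1), l2. split; [simpl; rewrite E; reflexivity|]. split; [simpl; auto|auto].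
    + exists nil, ((e,c)::t). split; [reflexivity|]. split; [simpl; auto|]. simpl. split; [lia|split; auto].
Qed.

Lemma chain_main (W : nat -> nat -> R) (K : nat) :
  (forall e c, 0 <= W e c) ->
  (forall e c, (S e <= K)%nat -> W e (2*c)%nat + W e (2*c+1)%nat <= W (S e) c) ->
  forall e0, (e0 <= K)%nat -> forall c0 l, chain (c0 * 2^e0) ((c0+1)*2^e0) l -> wsum W l <= W e0 c0.
Proof.
  intros HW Hsup. induction e0 as [|e1 IH]; intros HK c0 l Hc.
  - destruct l as [|[e c] t]; simpl in *; [apply HW|].
    destruct Hc as [H1 [H2 H3]]. pose proof (pow2_pos_nat e).
    assert (e = 0%nat).
    { destruct e; auto. exfalso. rewrite Nat.pow_succ_r' in *. nia. }
    subst. simpl in *. assert (c = c0) by lia. subst.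
    assert (t = nil) by (eapply chain_nil; exact H3). subst t.
    simpl. lra.
  - destruct l as [|[e c] t]; [simpl; apply HW|].
    destruct (Nat.eq_dec e (S e1)) as [->|Hne].
    + simpl in Hc. destruct Hc as [H1 [H2 H3]]. pose proof (pow2_pos_nat (S e1)).
      set (p := (2^S e1)%nat) in *.
      apply (proj2 (Nat.mul_le_mono_pos_r _ _ p H)) in H1. apply (proj2 (Nat.mul_le_mono_pos_r _ _ p H)) in H2.
      assert (c = c0) by lia. subst.
      rewrite (chain_nil _ t H3). simpl. lra.
    + assert (HF : Forall (fun p => (fst p <= e1)%nat) ((e,c)::t)).
      { pose proof (chain_forall _ _ _ Hc) as HF. inversion HF as [|x y Hh HF']; subst.
        simpl in Hh. constructor.
        - simpl. destruct Hh as [A B]. destruct (Nat.le_gt_cases e e1); auto.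
          exfalso. assert (e = S e1 \/ S (S e1) <= e)%nat as [|Hbig] by lia; [contradiction|].
          pose proof (Nat.pow_le_mono_r 2 _ _ ltac:(lia) Hbig). rewrite Nat.pow_succ_r' in H0.
          pose proof (node_len _ _ _ _ A B) as L1. rewrite Nat.mul_add_distr_r, Nat.mul_1_l in L1.
          rewrite Nat.pow_succ_r' in H0. pose proof (pow2_pos_nat e1). lia.
        - simpl in Hc. destruct Hc as [H1 [H2 H3]].
          pose proof (chain_forall _ _ _ H3) as HF3.
          eapply Forall_impl; [|exact HF3]. intros [e' c'] [A B]. simpl in *.
          destruct (Nat.le_gt_cases e' e1); auto. exfalso.
          pose proof (Nat.pow_le_mono_r 2 (S e1) e' ltac:(lia) ltac:(lia)).
          pose proof (node_len _ _ _ _ A B) as L1. pose proof (node_len _ _ _ _ H1 H2) as L2.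
          rewrite Nat.mul_add_distr_r, Nat.mul_1_l in L1. rewrite Nat.mul_add_distr_r, Nat.mul_1_l in L2.
          pose proof (pow2_pos_nat e). rewrite Nat.pow_succ_r' in H0. rewrite Nat.mul_add_distr_r, Nat.mul_1_l in L1. lia. }
      assert (Elo : (c0 * 2^S e1 = (2*c0) * 2^e1)%nat) by (rewrite Nat.pow_succ_r'; lia).
      assert (Ehi : ((c0+1) * 2^S e1 = (2*c0+1+1) * 2^e1)%nat) by (rewrite Nat.pow_succ_r'; lia).
      rewrite Elo, Ehi in Hc.
      destruct (chain_split e1 ((2*c0+1)*2^e1) _ ((e,c)::t) _ (ex_intro _ (2*c0+1)%nat eq_refl) HF Hc
                 ltac:(pose proof (pow2_pos_nat e1); nia)) as [l1 [l2 [E [C1 C2]]]].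
      rewrite E, wsum_app.
      pose proof (IH ltac:(lia) (2*c0)%nat l1 C1). pose proof (IH ltac:(lia) (2*c0+1)%nat l2 C2).
      pose proof (Hsup e1 c0 HK). lra.
Qed.

Lemma Rdiv_le_0_compat (a b : R) : 0 <= a -> 0 < b -> 0 <= a / b.
Proof. intros. unfold Rdiv. apply Rmult_le_pos; [lra|left; apply Rinv_0_lt_compat; lra]. Qed.

Lemma exp_ge_sq (z : R) : 0 <= z -> (z/2) * (z/2) <= exp z.
Proof.
  intro Hz. assert (exp z = exp (z/2) * exp (z/2)) as -> by (rewrite <- exp_plus; f_equal; field).
  pose proof (exp_ineq1_le (z/2)). apply Rmult_le_compat; lra.
Qed.

Lemma exp_ln_pow2 (n : nat) : 2 ^ n = exp (INR n * ln 2).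
Proof. rewrite <- ln_pow by lra. rewrite exp_ln; [reflexivity|apply pow_lt; lra]. Qed.

Lemma Rpower_ge1 (t q : R) : 1 <= t -> 0 <= q -> 1 <= Rpower t q.
Proof.
  intros Ht Hq. unfold Rpower. rewrite <- exp_0. apply exp_le.
  assert (0 <= ln t) by (destruct (Req_dec t 1) as [->|]; [rewrite ln_1; lra| left; rewrite <- ln_1; apply ln_increasing; lra]).
  nra.
Qed.

Lemma ln_le (x y : R) : 0 < x -> x <= y -> ln x <= ln y.
Proof. intros Hx Hxy. destruct (Req_dec x y) as [->|]; [lra|left; apply ln_increasing; lra]. Qed.

Lemma compare (Phi : R -> R) (q delta L M s0 : R) :
  q > 1/2 -> (forall t, 0 <= t -> 0 <= Phi t) ->
  (forall s t, 0 <= s -> s <= t -> Phi s <= Phi t) ->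
  0 < delta < 1 -> (forall t, 0 < t < delta -> Phi t = t / Rpower (ln (1 / t)) q) ->
  0 < L -> 0 < M -> 0 <= s0 ->
  let kap := Rmin (1/8) (2*q - 1) in
  exists C1 C2, 0 <= C1 /\ 0 <= C2 /\
    forall (n : nat) (sg : R), 0 <= sg -> sg <= s0 + M * INR n ->
      Phi (10 * (L / 2^n) * (sg + 14 * M)) <=
        (L / 2^n) * (C1 + C2 * Ef (kap / (M*M)) kap (INR n + 1) sg).
Proof.
  intros Hq HP0 Hmono Hd Hform HL HM Hs0 kap.
  assert (Hkap : 0 < kap /\ kap <= 1/8 /\ kap <= 2*q - 1).
  { unfold kap, Rmin. destruct Rle_dec; lra. }
  set (rho := ln 2 / 2).
  assert (Hrho : 0 < rho) by (unfold rho; pose proof ln_lt_2; lra).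
  set (P := 10 * L * (s0 + 14 * M)). set (Q := 10 * L * M).
  assert (HP : 0 < P) by (unfold P; nra). assert (HQ : 0 < Q) by (unfold Q; nra).
  set (T := Rmax 1 (Rmax (4 * (P + Q) / (rho * rho)) (- ln delta / rho))).
  destruct (INR_archimed 1 T ltac:(lra)) as [n1 Hn1]. rewrite Rmult_1_r in Hn1.
  assert (HT1 : 1 <= T /\ 4 * (P + Q) / (rho * rho) <= T /\ - ln delta / rho <= T).
  { unfold T, Rmax. repeat destruct Rle_dec; lra. }
  set (K1 := 10 / Rpower (rho / 2) q).
  assert (HK1 : 0 < K1) by (unfold K1, Rpower; apply Rdiv_lt_0_compat; [lra|apply exp_pos]).
  set (Xm := 10 * L * (s0 + M * INR n1 + 14 * M)).
  set (C1 := Rmax (Phi Xm * 2 ^ n1 / L) (K1 * (1 + 14 * M))).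
  set (mu := kap / (M * M)).
  assert (Hmu : 0 < mu) by (unfold mu; apply Rdiv_lt_0_compat; nra).
  set (C2 := K1 * (1 + 14 * M) / mu).
  assert (HXm : 0 <= Xm).
  { unfold Xm. pose proof (pos_INR n1). assert (0 <= M * INR n1) by (apply Rmult_le_pos; lra).
    apply Rmult_le_pos; [lra|lra]. }
  assert (HC1 : Phi Xm * 2 ^ n1 / L <= C1 /\ K1 * (1 + 14 * M) <= C1).
  { unfold C1. split; [apply Rmax_l|apply Rmax_r]. }
  assert (HC1p : 0 <= C1).
  { pose proof (HP0 Xm HXm). pose proof (pow2_pos n1).
    assert (0 <= Phi Xm * 2 ^ n1 / L) by (apply Rdiv_le_0_compat; nra). lra. }
  assert (HC2 : 0 <= C2) by (unfold C2; apply Rdiv_le_0_compat; nra).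
  exists C1, C2. split; [exact HC1p|split; [exact HC2|]].
  intros n sg Hsg Hsgb.
  pose proof (pow2_pos n) as H2n.
  assert (Hl : 0 < L / 2^n) by (apply Rdiv_lt_0_compat; lra).
  set (x := 10 * (L / 2 ^ n) * (sg + 14 * M)).
  assert (Hx : 0 < x) by (unfold x; nra).
  assert (HEf : 0 <= Ef mu kap (INR n + 1) sg) by (unfold Ef; left; apply exp_pos).
  destruct (Nat.lt_ge_cases n n1) as [Hsmall|Hbig].
  -
    assert (Hxle : x <= Xm).
    { unfold x, Xm. pose proof (lt_INR _ _ Hsmall).
      assert (L / 2^n <= L).
      { apply (Rmult_le_reg_r (2^n)); [lra|]. unfold Rdiv. rewrite Rmult_assoc, Rinv_l by lra.
        pose proof (pow_R1_Rle 2 n ltac:(lra)). nra. }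
      assert (sg + 14 * M <= s0 + M * INR n1 + 14 * M) by nra.
      assert (0 <= sg + 14 * M) by lra.
      assert (10 * (L / 2 ^ n) * (sg + 14 * M) <= 10 * L * (sg + 14 * M)) by nra.
      nra. }
    pose proof (Hmono x Xm ltac:(lra) Hxle) as H1.
    assert (Phi Xm <= (L / 2^n) * C1).
    { assert (Phi Xm <= (L / 2 ^ n1) * (Phi Xm * 2 ^ n1 / L)).
      { right. field. split; [lra|apply pow_nonzero; lra]. }
      assert ((L / 2^n1) <= L / 2^n).
      { unfold Rdiv. apply Rmult_le_compat_l; [lra|]. apply Rinv_le_contravar; [lra|].
        apply Rle_pow; [lra|lia]. }
      pose proof (HP0 Xm HXm). pose proof (pow2_pos n1).
      assert (0 <= Phi Xm * 2 ^ n1 / L) by (apply Rdiv_le_0_compat; nra).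
      assert (0 < L / 2^n1) by (apply Rdiv_lt_0_compat; lra).
      apply Rle_trans with ((L / 2 ^ n1) * (Phi Xm * 2 ^ n1 / L)); [lra|].
      apply Rle_trans with ((L / 2 ^ n) * (Phi Xm * 2 ^ n1 / L)); [nra|].
      apply Rmult_le_compat_l; lra. }
    assert (0 <= L / 2 ^ n * (C2 * Ef mu kap (INR n + 1) sg)).
    { apply Rmult_le_pos; [lra|]. apply Rmult_le_pos; lra. }
    rewrite Rmult_plus_distr_l. lra.
  -
    assert (Hn : T < INR n) by (pose proof (le_INR _ _ Hbig); lra).
    set (nn := INR n) in *.
    assert (Hnn1 : 1 <= nn) by lra.
    set (Y := P + Q * nn).
    assert (HY : 0 < Y) by (unfold Y; nra).
    assert (HYe : Y <= exp (rho * nn)).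
    { assert (4 * (P + Q) < rho * rho * nn).
      { assert (4 * (P + Q) / (rho * rho) < nn) by lra.
        apply (Rmult_lt_compat_l (rho*rho)) in H; [|nra].
        replace (rho * rho * (4 * (P + Q) / (rho * rho))) with (4 * (P+Q)) in H by (field; lra). lra. }
      pose proof (exp_ge_sq (rho * nn) ltac:(nra)).
      assert (Y <= (P + Q) * nn) by (unfold Y; nra).
      nra. }
    assert (Hxe : x <= exp (- (rho * nn))).
    { assert (x <= Y / 2^n).
      { unfold x, Y, P, Q. unfold Rdiv.
        assert (sg + 14 * M <= s0 + M * nn + 14 * M) by lra.
        assert (0 < / 2^n) by (apply Rinv_0_lt_compat; lra).
        assert (0 <= sg + 14 * M) by lra.
        replace (10 * (L * / 2 ^ n) * (sg + 14 * M)) with ((10 * L * / 2^n) * (sg + 14 * M)) by ring.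
        replace ((10 * L * (s0 + 14 * M) + 10 * L * M * nn) * / 2 ^ n) with ((10 * L * / 2^n) * (s0 + M * nn + 14 * M)) by ring.
        apply Rmult_le_compat_l; [|lra]. nra. }
      rewrite exp_ln_pow2 in H. fold nn in H.
      replace (nn * ln 2) with (rho * nn + rho * nn) in H by (unfold rho; field).
      rewrite exp_plus in H.
      pose proof (exp_pos (rho * nn)).
      assert (Y / (exp (rho * nn) * exp (rho * nn)) <= / exp (rho * nn)).
      { apply (Rmult_le_reg_r (exp (rho * nn) * exp (rho * nn))); [nra|].
        unfold Rdiv. rewrite Rmult_assoc, Rinv_l by nra.
        replace (/ exp (rho * nn) * (exp (rho * nn) * exp (rho * nn))) with (exp (rho * nn)) by (field; lra).
        lra. }
      rewrite exp_Ropp. lra. }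
    assert (Hxd : x < delta).
    { eapply Rle_lt_trans; [exact Hxe|].
      rewrite <- (exp_ln delta) by lra. apply exp_increasing.
      assert (- ln delta / rho < nn) by lra.
      apply (Rmult_lt_compat_l rho) in H; [|lra].
      replace (rho * (- ln delta / rho)) with (- ln delta) in H by (field; lra). lra. }
    assert (Hlnx : rho * nn <= ln (1 / x)).
    { rewrite <- (ln_exp (rho * nn)). apply ln_le; [apply exp_pos|].
      pose proof (exp_pos (- (rho * nn))).
      replace (exp (rho * nn)) with (1 / exp (- (rho * nn))) by (rewrite exp_Ropp; field; apply exp_neq_0).
      unfold Rdiv. rewrite !Rmult_1_l. apply Rinv_le_contravar; lra. }
    rewrite (Hform x ltac:(lra)).
    set (tau := nn + 1).
    assert (Htau : 1 <= tau) by (unfold tau; lra).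
    set (Tq := Rpower tau q).
    assert (HTq : 1 <= Tq) by (apply Rpower_ge1; lra).
    assert (Hden : Rpower (rho / 2) q * Tq <= Rpower (ln (1 / x)) q).
    { unfold Tq. rewrite Rpower_mult_distr by lra.
      apply Rle_Rpower_l; [lra|]. split; [nra|]. unfold tau. nra. }
    assert (Hr2 : 0 < Rpower (rho / 2) q) by (unfold Rpower; apply exp_pos).
    assert (Hstep1 : x / Rpower (ln (1 / x)) q <= x / (Rpower (rho / 2) q * Tq)).
    { unfold Rdiv. apply Rmult_le_compat_l; [lra|]. apply Rinv_le_contravar; [nra|lra]. }
    eapply Rle_trans; [exact Hstep1|].
    replace (x / (Rpower (rho / 2) q * Tq)) with ((L / 2^n) * (K1 * (sg + 14 * M) / Tq))
      by (unfold x, K1; field; repeat split; lra).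
    apply Rmult_le_compat_l; [lra|].
    destruct (Rle_or_lt sg Tq) as [Hs|Hs].
    + assert ((sg + 14 * M) / Tq <= 1 + 14 * M).
      { apply (Rmult_le_reg_r Tq); [lra|]. unfold Rdiv. rewrite Rmult_assoc, Rinv_l by lra. nra. }
      assert (K1 * (sg + 14 * M) / Tq <= K1 * (1 + 14 * M)).
      { unfold Rdiv. rewrite Rmult_assoc. apply Rmult_le_compat_l; lra. }
      assert (0 <= C2 * Ef mu kap tau sg) by (apply Rmult_le_pos; [lra|unfold Ef; left; apply exp_pos]).
      lra.
    + set (lt := ln tau).
      assert (Hlt : 0 <= lt) by (unfold lt; rewrite <- ln_1; apply ln_le; lra).
      assert (ETq : Tq = exp (q * lt)) by reflexivity.
      assert (Etau : tau = exp lt) by (unfold lt; rewrite exp_ln; lra).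
      assert (Hsg1 : 1 < sg) by lra.
      assert (Hkey : mu * sg / Tq <= Ef mu kap tau sg).
      { unfold Ef. fold lt. rewrite Rminus_def, exp_plus.
        pose proof (exp_ineq1_le (mu * (sg * sg) / tau)) as Hex.
        assert (Hmt : 0 <= mu * (sg * sg) / tau) by (apply Rdiv_le_0_compat; nra).
        assert (E2 : exp (- (kap * lt)) = / exp (kap * lt)) by apply exp_Ropp.
        rewrite E2.
        pose proof (exp_pos (kap * lt)). pose proof (exp_pos (q * lt)). pose proof (exp_pos lt).
        assert (Hgrow : exp lt * exp (kap * lt) <= sg * Tq).
        { rewrite <- exp_plus. rewrite ETq.
          assert (exp (lt + kap * lt) <= exp (q * lt) * exp (q * lt)).
          { rewrite <- exp_plus. apply exp_le. nra. }
          rewrite ETq in Hs. nra. }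
        assert (mu * sg / Tq <= mu * (sg * sg) / tau * / exp (kap * lt)).
        { rewrite Etau. unfold Rdiv.
          apply (Rmult_le_reg_r (Tq * exp lt * exp (kap * lt))); [apply Rmult_lt_0_compat; [apply Rmult_lt_0_compat|]; lra|].
          replace (mu * sg * / Tq * (Tq * exp lt * exp (kap * lt))) with (mu * sg * (exp lt * exp (kap * lt))) by (field; lra).
          replace (mu * (sg * sg) * / exp lt * / exp (kap * lt) * (Tq * exp lt * exp (kap * lt))) with (mu * sg * (sg * Tq)) by (field; lra).
          apply Rmult_le_compat_l; nra. }
        assert (0 < / exp (kap * lt)) by (apply Rinv_0_lt_compat; lra).
        nra. }
      assert (K1 * (sg + 14 * M) / Tq <= C2 * (mu * sg / Tq)).
      { unfold C2. unfold Rdiv.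
        replace (K1 * (1 + 14 * M) * / mu * (mu * sg * / Tq)) with (K1 * ((1 + 14 * M) * sg) * / Tq) by (field; lra).
        assert (0 < / Tq) by (apply Rinv_0_lt_compat; lra).
        apply Rmult_le_compat_r; [lra|]. apply Rmult_le_compat_l; [lra|]. nra. }
      assert (C2 * (mu * sg / Tq) <= C2 * Ef mu kap tau sg) by (apply Rmult_le_compat_l; lra).
      lra.
Qed.

Fixpoint sumf (f : nat -> R) (j k : nat) : R :=
  match k with 0 => 0 | S k => f j + sumf f (S j) k end.

Fixpoint Dl (nf : nat -> nat -> nat * nat) (i : nat -> nat) (j k : nat) : list (nat*nat) :=
  match k with
  | 0 => nil
  | S k => (if Nat.ltb (i j) (i (S j)) then [nf (i j) (i (S j))] else nil) ++ Dl nf i (S j) k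
  end.

Lemma Phi_small q Phi : is_Phi_q q Phi -> q > 0 ->
  exists d, 0 < d /\ forall t, 0 < t < d -> Phi t <= t.
Proof.
  intros [H0 [Hm [Hc [delta [Hd Hf]]]]] Hq.
  exists (Rmin delta (1/3)). split; [unfold Rmin; destruct Rle_dec; lra|].
  intros t Ht. assert (t < delta /\ t < 1/3) by (unfold Rmin in Ht; destruct Rle_dec in Ht; lra).
  rewrite Hf by lra.
  assert (1 <= ln (1/t)).
  { rewrite <- (ln_exp 1) at 1. apply ln_le; [apply exp_pos|]. pose proof exp_le_3.
    apply (Rmult_le_reg_r t); [lra|]. replace (1 / t * t) with 1 by (field; lra).
    assert (exp 1 * t <= 3 * t) by (apply Rmult_le_compat_r; lra). lra. }
  pose proof (Rpower_ge1 (ln (1/t)) q H1 ltac:(lra)).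
  assert (HI : / Rpower (ln (1/t)) q <= / 1) by (apply Rinv_le_contravar; lra). rewrite Rinv_1 in HI.
  change (t * / Rpower (ln (1/t)) q <= t). assert (0 < / Rpower (ln (1/t)) q) by (apply Rinv_0_lt_compat; lra). nra.
Qed.

Lemma Phi_0 q Phi : is_Phi_q q Phi -> q > 0 -> Phi 0 = 0.
Proof.
  intros HP Hq. destruct (Phi_small q Phi HP Hq) as [d [Hd Hs]].
  destruct HP as [H0 [Hm _]].
  pose proof (H0 0 (Rle_refl 0)).
  destruct (Rle_or_lt (Phi 0) 0) as [|Hp]; [lra|].
  set (t := Rmin (d/2) (Phi 0 / 2)).
  assert (0 < t /\ t < d /\ t < Phi 0) by (unfold t, Rmin; destruct Rle_dec; lra).
  pose proof (Hs t ltac:(lra)). pose proof (Hm 0 t ltac:(lra) ltac:(lra)). lra.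
Qed.

Lemma mono_range (i : nat -> nat) j k :
  (forall t, (j <= t < j + k)%nat -> (i t <= i (S t))%nat) ->
  forall t1 t2, (j <= t1 <= t2)%nat -> (t2 <= j + k)%nat -> (i t1 <= i t2)%nat.
Proof.
  intros H t1 t2 [H1 H2]. induction t2 as [|t2 IH]; intros H3.
  - assert (t1 = 0%nat) by lia. subst. lia.
  - destruct (Nat.eq_dec t1 (S t2)) as [->|Hn]; [lia|].
    specialize (IH ltac:(lia) ltac:(lia)). specialize (H t2 ltac:(lia)). lia.
Qed.

Lemma sumf_Dl (tf : nat -> R) nf i (W : nat -> nat -> R) :
  forall k j,
  (forall t, (j <= t < j + k)%nat -> (i t < i (S t))%nat -> tf t <= W (fst (nf (i t) (i (S t)))) (snd (nf (i t) (i (S t))))) ->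
  (forall t, (j <= t < j + k)%nat -> i t = i (S t) -> tf t <= 0) ->
  (forall t, (j <= t < j + k)%nat -> (i t <= i (S t))%nat) ->
  sumf tf j k <= wsum W (Dl nf i j k).
Proof.
  induction k as [|k IH]; intros j H1 H2 Hm; simpl; [lra|].
  rewrite wsum_app. specialize (IH (S j) ltac:(intros t Ht; apply H1; lia) ltac:(intros t Ht; apply H2; lia) ltac:(intros t Ht; apply Hm; lia)).
  destruct (Nat.ltb_spec (i j) (i (S j))) as [Hlt|Hge].
  - specialize (H1 j ltac:(lia) Hlt). destruct (nf (i j) (i (S j))) as [e c]. simpl in *. lra.
  - assert (i j = i (S j)) by (specialize (Hm j ltac:(lia)); lia).
    specialize (H2 j ltac:(lia) H). simpl. lra.
Qed.

Lemma chain_Dl nf i hi :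
  (forall al be, (al < be)%nat -> (al <= snd (nf al be) * 2^(fst (nf al be)))%nat /\
       ((snd (nf al be) + 1) * 2^(fst (nf al be)) <= be)%nat) ->
  forall k j lo, (lo <= i j)%nat -> (forall t, (j <= t < j + k)%nat -> (i t <= i (S t))%nat) ->
  (i (j + k) <= hi)%nat -> chain lo hi (Dl nf i j k).
Proof.
  intros Hn. induction k as [|k IH]; intros j lo Hlo Hm Hhi; simpl; [auto|].
  assert (Hs : (i (S j) <= hi)%nat).
  { pose proof (mono_range i j (S k) Hm (S j) (j + S k) ltac:(lia) ltac:(lia)). lia. }
  replace (j + S k)%nat with (S j + k)%nat in Hhi by lia.
  destruct (Nat.ltb_spec (i j) (i (S j))) as [Hlt|Hge].
  - specialize (Hn _ _ Hlt). destruct (nf (i j) (i (S j))) as [e c]. simpl in *.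
    split; [lia|split; [lia|]]. apply IH; [lia| intros t Ht; apply Hm; lia| exact Hhi].
  - simpl. pose proof (Hm j ltac:(lia)). apply IH; [lia| intros t Ht; apply Hm; lia| exact Hhi].
Qed.

Lemma grid_thm (h : R -> R) (M a b q : R) (Phi : R -> R) :
  (forall x hh, hh > 0 -> Rabs (h (x + hh) - 2 * h x + h (x - hh)) <= 2 * M * hh) ->
  M > 0 -> a < b -> q > 1/2 -> is_Phi_q q Phi ->
  exists C, forall (K N : nat) (i : nat -> nat), i 0%nat = 0%nat -> i N = (2^K)%nat ->
    (forall t, (t < N)%nat -> (i t <= i (S t))%nat) ->
    sumf (fun j => Phi (Rabs (Hg h a ((b - a) / 2^K) (i (S j)) - Hg h a ((b - a) / 2^K) (i j)))) 0 N <= C.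
Proof.
  intros HZ HM Hab Hq HP.
  pose proof HP as [HP0 [Hmono [_ [delta [Hd Hform]]]]].
  set (L := b - a). assert (HL : 0 < L) by (unfold L; lra).
  set (sK := (h b - h a) / L).
  destruct (compare Phi q delta L M (Rabs sK) Hq HP0 Hmono Hd Hform HL HM (Rabs_pos sK)) as [C1 [C2 [HC1 [HC2 Hcmp]]]].
  set (kap := Rmin (1/8) (2*q - 1)) in *.
  assert (Hkap : 0 < kap /\ kap <= 1/8 /\ kap <= 2*q - 1).
  { unfold kap, Rmin. destruct Rle_dec; lra. }
  set (mu := kap / (M*M)) in *.
  assert (Hmu : 0 < mu) by (unfold mu; apply Rdiv_lt_0_compat; nra).
  assert (HmuM : mu * (M*M) = kap) by (unfold mu; field; lra).
  exists (L * (C1 + C2 * Ef mu kap 1 sK)).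
  intros K N i Hi0 HiN Hmon.
  set (u := (b - a) / 2^K). fold L in u.
  pose proof (pow2_pos K) as H2K.
  assert (Hu : 0 < u) by (unfold u; apply Rdiv_lt_0_compat; lra).
  assert (HuK : 2^K * u = L) by (unfold u; field; lra).
  assert (HZG : ZG h a u M).
  { intros i0 k. unfold Hg. destruct (Nat.eq_dec k 0) as [->|Hk].
    - simpl. rewrite !Nat.add_0_r.
      replace (h (a + INR i0 * u) - 2 * h (a + INR i0 * u) + h (a + INR i0 * u)) with 0 by ring.
      rewrite Rabs_R0. lra.
    - assert (0 < INR k) by (apply lt_0_INR; lia).
      specialize (HZ (a + INR (i0 + k) * u) (INR k * u) ltac:(nra)).
      rewrite !plus_INR, !mult_INR in *. simpl INR in *.
      replace (a + (INR i0 + INR k) * u + INR k * u) with (a + (INR i0 + (1+1) * INR k) * u) in HZ by ring.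
      replace (a + (INR i0 + INR k) * u - INR k * u) with (a + INR i0 * u) in HZ by ring.
      lra. }
  assert (HSK : Sl h a u K 0 = sK).
  { unfold Sl, Hg, sK.
    assert (I2 : INR 2 = 2) by (simpl; ring).
    replace (INR ((0 + 1) * 2 ^ K)) with (2^K) by (rewrite mult_INR, pow_INR, I2; simpl; ring).
    replace (INR (0 * 2 ^ K)) with 0 by (simpl; ring).
    rewrite HuK. replace (a + L) with b by (unfold L; ring). replace (a + 0 * u) with a by ring. reflexivity. }
  assert (Hex : forall al be : nat, exists p : nat * nat, (al < be)%nat ->
     (al <= snd p * 2^(fst p))%nat /\ ((snd p + 1) * 2^(fst p) <= be)%nat /\
     Rabs (Hg h a u be - Hg h a u al) <= 10 * 2^(fst p) * u * (Rabs (Sl h a u (fst p) (snd p)) + 14 * M)).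
  { intros al be. destruct (Nat.lt_ge_cases al be) as [Hlt|Hge].
    - destruct (Jbound h a u M Hu ltac:(lra) HZG al be Hlt) as [e [c Hc]]. exists (e,c). intros _. exact Hc.
    - exists (0,0)%nat. intros; lia. }
  set (nf := fun al be => proj1_sig (constructive_indefinite_description _ (Hex al be))).
  assert (Hnf : forall al be, (al < be)%nat ->
     (al <= snd (nf al be) * 2^(fst (nf al be)))%nat /\ ((snd (nf al be) + 1) * 2^(fst (nf al be)) <= be)%nat /\
     Rabs (Hg h a u be - Hg h a u al) <= 10 * 2^(fst (nf al be)) * u * (Rabs (Sl h a u (fst (nf al be)) (snd (nf al be))) + 14 * M)).
  { intros al be Hlt. unfold nf. destruct (constructive_indefinite_description _ (Hex al be)) as [p Hp]. simpl. auto. }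
  set (W := fun e c => 2^e * u * (C1 + C2 * Ef mu kap (INR (K - e) + 1) (Sl h a u e c))).
  assert (HW0 : forall e c, 0 <= W e c).
  { intros e c. unfold W. pose proof (pow2_pos e). apply Rmult_le_pos; [nra|].
    assert (0 <= Ef mu kap (INR (K - e) + 1) (Sl h a u e c)) by (unfold Ef; left; apply exp_pos). nra. }
  assert (HWs : forall e c, (S e <= K)%nat -> W e (2*c)%nat + W e (2*c+1)%nat <= W (S e) c).
  { intros e c HeK. unfold W.
    set (s := Sl h a u (S e) c).
    set (d := (Sl h a u e (2*c+1) - Sl h a u e (2*c)) / 2).
    assert (Es : s = (Sl h a u e (2*c) + Sl h a u e (2*c+1)) / 2) by (apply split_slope; lra).
    assert (E1 : Sl h a u e (2*c) = s - d) by (unfold d; rewrite Es; field).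
    assert (E2 : Sl h a u e (2*c+1) = s + d) by (unfold d; rewrite Es; field).
    assert (Hdd : Rabs d <= M).
    { pose proof (adj_slope h a u M e (2*c) Hu HZG) as Ha. replace (S (2*c)) with (2*c+1)%nat in Ha by lia.
      unfold d. unfold Rdiv. rewrite Rabs_mult, Rabs_inv, (Rabs_pos_eq 2) by lra. lra. }
    set (tau := INR (K - S e) + 1).
    assert (Et : INR (K - e) + 1 = tau + 1) by (unfold tau; replace (K - e)%nat with (S (K - S e)) by lia; rewrite S_INR; ring).
    assert (Htau : 1 <= tau) by (unfold tau; pose proof (pos_INR (K - S e)); lra).
    pose proof (Ef_super mu kap M tau s d ltac:(lra) ltac:(lra) ltac:(lra) Htau Hdd) as Hsup.
    rewrite E1, E2, Et. replace (K - S e)%nat with (K - S e)%nat by reflexivity. fold tau.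
    pose proof (pow2_pos e). simpl pow.
    assert (0 <= 2^e * u) by nra.
    assert (C2 * (Ef mu kap (tau + 1) (s - d) + Ef mu kap (tau + 1) (s + d)) <= C2 * (2 * Ef mu kap tau s))
      by (apply Rmult_le_compat_l; lra).
    assert (2 ^ e * u * (C2 * (Ef mu kap (tau + 1) (s - d) + Ef mu kap (tau + 1) (s + d))) <= 2 ^ e * u * (C2 * (2 * Ef mu kap tau s)))
      by (apply Rmult_le_compat_l; lra).
    nra. }
  assert (Hnode : forall al be, (al < be)%nat -> (be <= 2^K)%nat ->
     Phi (Rabs (Hg h a u be - Hg h a u al)) <= W (fst (nf al be)) (snd (nf al be))).
  { intros al be Hlt HbK. destruct (Hnf al be Hlt) as [Ha1 [Ha2 Ha3]].
    set (e := fst (nf al be)) in *. set (c := snd (nf al be)) in *.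
    assert (HeK : (e <= K)%nat).
    { destruct (Nat.le_gt_cases e K) as [|Hgt]; auto. exfalso.
      pose proof (Nat.pow_le_mono_r 2 (S K) e ltac:(lia) ltac:(lia)). rewrite Nat.pow_succ_r' in H.
      pose proof (pow2_pos_nat K). nia. }
    assert (Hc1 : (c + 1 <= 2^(K - e))%nat).
    { assert (E : (2^K = 2^e * 2^(K-e))%nat) by (rewrite <- Nat.pow_add_r; f_equal; lia).
      pose proof (pow2_pos_nat e). rewrite E in HbK.
      apply (proj2 (Nat.mul_le_mono_pos_r _ _ (2^e) H)). lia. }
    pose proof (reach h a u M Hu HZG (K - e) e c Hc1) as Hr.
    replace (e + (K - e))%nat with K in Hr by lia. rewrite HSK in Hr.
    set (sg := Rabs (Sl h a u e c)).
    specialize (Hcmp (K - e)%nat sg (Rabs_pos _) ltac:(unfold sg; lra)).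
    assert (El : L / 2 ^ (K - e) = 2^e * u).
    { unfold u. fold L. replace K with (e + (K - e))%nat at 2 by lia. rewrite pow_add.
      field. split; apply pow_nonzero; lra. }
    rewrite El in Hcmp.
    assert (EE : Ef mu kap (INR (K - e) + 1) sg = Ef mu kap (INR (K - e) + 1) (Sl h a u e c)).
    { unfold Ef, sg. rewrite <- Rabs_mult, Rabs_pos_eq by nra. reflexivity. }
    rewrite EE in Hcmp.
    eapply Rle_trans; [|exact Hcmp].
    apply Hmono; [apply Rabs_pos|]. fold sg in Ha3. lra. }
  assert (Hsum : sumf (fun j => Phi (Rabs (Hg h a u (i (S j)) - Hg h a u (i j)))) 0 N <= wsum W (Dl nf i 0 N)).
  { apply sumf_Dl.
    - intros j Hj Hlt. apply Hnode; [exact Hlt|].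
      rewrite <- HiN. apply (mono_range i 0 N (fun t Ht => Hmon t ltac:(lia))); lia.
    - intros j Hj Heq. rewrite Heq. unfold Rminus. rewrite Rplus_opp_r, Rabs_R0, (Phi_0 q Phi HP ltac:(lra)). lra.
    - intros t Ht. apply Hmon. lia. }
  assert (Hch : chain (0 * 2^K) ((0+1) * 2^K) (Dl nf i 0 N)).
  { apply chain_Dl.
    - intros al be Hlt. destruct (Hnf al be Hlt) as [A1 [A2 _]]. auto.
    - lia.
    - intros t Ht. apply Hmon. lia.
    - simpl. rewrite HiN. lia. }
  pose proof (chain_main W K HW0 HWs K (le_n K) 0%nat _ Hch) as Hcm.
  assert (EW : W K 0%nat = L * (C1 + C2 * Ef mu kap 1 sK)).
  { unfold W. rewrite Nat.sub_diag, HSK, HuK. simpl INR. rewrite Rplus_0_l. reflexivity. }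
  rewrite EW in Hcm. exact (Rle_trans _ _ _ Hsum Hcm).
Qed.

Lemma cont_eps (g : R -> R) (x0 eps : R) : continuity_pt g x0 -> eps > 0 ->
  exists al, al > 0 /\ forall y, Rabs (y - x0) < al -> Rabs (g y - g x0) < eps.
Proof.
  intros Hc He. unfold continuity_pt, continue_in, limit1_in, limit_in in Hc.
  destruct (Hc eps He) as [al [Hal H]]. exists al. split; auto.
  intros y Hy. destruct (Req_dec y x0) as [->|Hn].
  - unfold Rminus. rewrite Rplus_opp_r, Rabs_R0. lra.
  - apply (H y). split; [split; [exact I|auto]|exact Hy].
Qed.

Definition fl (z : R) : nat := Z.to_nat (up z - 1).

Lemma fl_spec z : 0 <= z -> INR (fl z) <= z < INR (fl z) + 1.
Proof.
  intro Hz. unfold fl. destruct (archimed z) as [H1 H2].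
  assert (Hpos : (1 <= up z)%Z).
  { apply le_IZR. assert (0 < IZR (up z)) by lra.
    assert (0 < up z)%Z by (apply lt_IZR; lra). apply IZR_le. lia. }
  rewrite INR_IZR_INZ, Z2Nat.id by lia. rewrite minus_IZR. simpl. lra.
Qed.

Lemma fl_unique z k : INR k <= z < INR k + 1 -> fl z = k.
Proof.
  intros [H1 H2]. assert (0 <= z) by (pose proof (pos_INR k); lra).
  destruct (fl_spec z H) as [A B].
  assert (fl z < k + 1)%nat by (apply INR_lt; rewrite plus_INR; simpl; lra).
  assert (k < fl z + 1)%nat by (apply INR_lt; rewrite plus_INR; simpl; lra).
  lia.
Qed.

Lemma fl_mono z1 z2 : 0 <= z1 -> z1 <= z2 -> (fl z1 <= fl z2)%nat.
Proof.
  intros H1 H2. destruct (fl_spec z1 H1). destruct (fl_spec z2 ltac:(lra)).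
  assert (fl z1 < fl z2 + 1)%nat by (apply INR_lt; rewrite plus_INR; simpl; lra). lia.
Qed.

Lemma INR_lt_pow2 n : INR n < 2 ^ n.
Proof.
  induction n as [|n IH]; [simpl; lra|]. rewrite S_INR.
  replace (2 ^ S n) with (2 * 2^n) by reflexivity. pose proof (pow_R1_Rle 2 n ltac:(lra)). lra.
Qed.

Lemma sumf_last (f : nat -> R) : forall k j, sumf f j (S k) = sumf f j k + f (j + k)%nat.
Proof.
  induction k as [|k IH]; intros j; simpl.
  - rewrite Nat.add_0_r. ring.
  - simpl in IH. rewrite IH. replace (S j + k)%nat with (j + S k)%nat by lia. ring.
Qed.

Lemma sum_f_R0_sumf (f : nat -> R) n : sum_f_R0 f n = sumf f 0 (S n).
Proof.
  induction n as [|n IH]; [simpl; ring|].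
  change (sum_f_R0 f (S n)) with (sum_f_R0 f n + f (S n)). rewrite IH, (sumf_last f (S n) 0). reflexivity.
Qed.

Lemma sumf_le (f g : nat -> R) : forall k j, (forall t, (j <= t < j + k)%nat -> f t <= g t) ->
  sumf f j k <= sumf g j k.
Proof.
  induction k as [|k IH]; intros j H; simpl; [lra|].
  pose proof (H j ltac:(lia)). pose proof (IH (S j) ltac:(intros t Ht; apply H; lia)). lra.
Qed.

Lemma sumf_affine (f : nat -> R) al be : forall k j,
  sumf (fun t => al * f t + be) j k = al * sumf f j k + be * INR k.
Proof.
  induction k as [|k IH]; intros j; [simpl; ring|]. cbn [sumf]. rewrite IH. rewrite S_INR. ring.
Qed.

Lemma unif_cont (g : R -> R) (x : nat -> R) (eta : R) : continuity g -> eta > 0 ->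
  forall n, exists al, al > 0 /\ forall t, (t <= n)%nat -> forall y, Rabs (y - x t) < al -> Rabs (g y - g (x t)) < eta.
Proof.
  intros Hc He. induction n as [|n IH].
  - destruct (cont_eps g (x 0%nat) eta (Hc _) He) as [al [Hal H]]. exists al. split; auto.
    intros t Ht. assert (t = 0%nat) by lia. subst. auto.
  - destruct IH as [a1 [Ha1 H1]]. destruct (cont_eps g (x (S n)) eta (Hc _) He) as [a2 [Ha2 H2]].
    exists (Rmin a1 a2). split; [unfold Rmin; destruct Rle_dec; lra|].
    intros t Ht y Hy. assert (Rmin a1 a2 <= a1 /\ Rmin a1 a2 <= a2) by (split; [apply Rmin_l|apply Rmin_r]).
    destruct (Nat.eq_dec t (S n)) as [->|Hn]; [apply H2; lra|]. apply H1; [lia|lra].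
Qed.

Lemma part_mono (x : nat -> R) N : (forall j, (j < N)%nat -> x j < x (S j)) ->
  forall t1 t2, (t1 <= t2 <= N)%nat -> x t1 <= x t2.
Proof.
  intros H t1 t2 Ht. induction t2 as [|t2 IH].
  - assert (t1 = 0%nat) by lia. subst. lra.
  - destruct (Nat.eq_dec t1 (S t2)) as [->|Hn]; [lra|].
    specialize (IH ltac:(lia)). specialize (H t2 ltac:(lia)). lra.
Qed.

Theorem proposition6p1 :
  forall (g : R -> R), zygmund g ->
  forall (q : R), q > 1 / 2 ->
  forall (Phi : R -> R), is_Phi_q q Phi ->
  loc_finite_Phi_variation Phi g.
Proof.
  intros g [Hcont [M [HM Hz]]] q Hq Phi HP a b Hab.
  set (h := fun x => 2 * g x).
  assert (Hzh : forall x hh, hh > 0 -> Rabs (h (x + hh) - 2 * h x + h (x - hh)) <= 2 * (2 * M) * hh).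
  { intros x hh Hh. unfold h.
    replace (2 * g (x + hh) - 2 * (2 * g x) + 2 * g (x - hh)) with (2 * (g (x + hh) - 2 * g x + g (x - hh))) by ring.
    rewrite Rabs_mult, (Rabs_pos_eq 2) by lra. specialize (Hz x hh Hh). lra. }
  destruct (grid_thm h (2 * M) a b q Phi Hzh ltac:(lra) Hab Hq HP) as [C0 HC0].
  exists (C0 / 2 + 1 / 2).
  intros N x [HN [Hx0 [HxN Hinc]]].
  unfold Phi_var_sum. replace (N - 1)%nat with (pred N) by lia.
  rewrite sum_f_R0_sumf. replace (S (pred N)) with N by lia.
  pose proof HP as [HP0 [Hmono [Hconv _]]].
  destruct (Phi_small q Phi HP ltac:(lra)) as [d [Hd Hsm]].
  assert (HNr : 1 <= INR N) by (apply (le_INR 1); lia).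
  set (eta := Rmin (d / 8) (1 / (4 * INR N))).
  assert (Heta : 0 < eta /\ eta <= d / 8 /\ eta <= 1 / (4 * INR N)).
  { unfold eta. split; [|split; [apply Rmin_l|apply Rmin_r]].
    unfold Rmin; destruct Rle_dec; [lra|]. apply Rdiv_lt_0_compat; lra. }
  assert (HP4 : Phi (4 * eta) <= 1 / INR N).
  { pose proof (Hsm (4 * eta) ltac:(lra)).
    assert (4 * eta <= 1 / INR N).
    { destruct Heta as [_ [_ H3]]. replace (1 / (4 * INR N)) with (/4 * (1 / INR N)) in H3 by (field; lra). lra. }
    lra. }
  destruct (unif_cont g x eta Hcont ltac:(lra) N) as [al [Hal Hun]].
  set (L := b - a). assert (HL : 0 < L) by (unfold L; lra).
  destruct (INR_archimed 1 (L / al) ltac:(lra)) as [K HK]. rewrite Rmult_1_r in HK.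
  pose proof (INR_lt_pow2 K) as HK2.
  pose proof (pow2_pos K) as H2K.
  set (u := (b - a) / 2^K).
  assert (Hu : 0 < u) by (unfold u; apply Rdiv_lt_0_compat; lra).
  assert (Hual : u < al).
  { unfold u. fold L. apply (Rmult_lt_reg_r (2^K)); [lra|].
    replace (L / 2 ^ K * 2 ^ K) with L by (field; lra).
    assert (L / al < 2^K) by lra.
    apply (Rmult_lt_compat_l al) in H; [|lra].
    replace (al * (L / al)) with L in H by (field; lra). lra. }
  assert (Hrange : forall t, (t <= N)%nat -> a <= x t <= b).
  { intros t Ht. rewrite <- Hx0, <- HxN. split; apply (part_mono x N Hinc); lia. }
  set (i := fun t => fl ((x t - a) / u)).
  assert (Hz0 : forall t, (t <= N)%nat -> 0 <= (x t - a) / u).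
  { intros t Ht. apply Rdiv_le_0_compat; [|lra]. pose proof (Hrange t Ht). lra. }
  assert (Hi0 : i 0%nat = 0%nat).
  { unfold i. apply fl_unique. rewrite Hx0. replace ((a - a) / u) with 0 by (field; lra). simpl. lra. }
  assert (HiN : i N = (2^K)%nat).
  { unfold i. apply fl_unique. rewrite HxN. rewrite pow_INR.
    assert (I2 : INR 2 = 2) by (simpl; ring). rewrite I2.
    replace ((b - a) / u) with (2^K) by (unfold u; field; lra). lra. }
  assert (Himon : forall t, (t < N)%nat -> (i t <= i (S t))%nat).
  { intros t Ht. unfold i. apply fl_mono; [apply Hz0; lia|].
    unfold Rdiv. apply Rmult_le_compat_r; [left; apply Rinv_0_lt_compat; lra|].
    pose proof (Hinc t Ht). lra. }
  specialize (HC0 K N i Hi0 HiN Himon).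
  assert (Hclose : forall t, (t <= N)%nat -> Rabs (g (a + INR (i t) * u) - g (x t)) < eta).
  { intros t Ht. apply Hun; [exact Ht|].
    destruct (fl_spec _ (Hz0 t Ht)) as [A1 A2]. fold (i t) in A1, A2.
    assert (INR (i t) * u <= x t - a).
    { apply (Rmult_le_compat_r u) in A1; [|lra]. replace ((x t - a) / u * u) with (x t - a) in A1 by (field; lra). lra. }
    assert (x t - a < INR (i t) * u + u).
    { apply (Rmult_lt_compat_r u) in A2; [|lra]. replace ((x t - a) / u * u) with (x t - a) in A2 by (field; lra). lra. }
    rewrite Rabs_left1 by lra. lra. }
  apply Rle_trans with (sumf (fun j => / 2 * Phi (Rabs (Hg h a ((b - a) / 2 ^ K) (i (S j)) - Hg h a ((b - a) / 2 ^ K) (i j))) + / 2 * Phi (4 * eta)) 0 N).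
  - apply sumf_le. intros t Ht. fold u. unfold Hg, h.
    pose proof (Hclose t ltac:(lia)). pose proof (Hclose (S t) ltac:(lia)).
    set (D := g (a + INR (i (S t)) * u) - g (a + INR (i t) * u)).
    assert (Hdel : Rabs (g (x (S t)) - g (x t)) <= Rabs D + 2 * eta).
    { unfold D. 
      replace (g (x (S t)) - g (x t)) with ((g (x (S t)) - g (a + INR (i (S t)) * u)) + (g (a + INR (i (S t)) * u) - g (a + INR (i t) * u)) + (g (a + INR (i t) * u) - g (x t))) by ring.
      eapply Rle_trans; [apply Rabs_triang|]. eapply Rle_trans; [apply Rplus_le_compat_r; apply Rabs_triang|].
      rewrite Rabs_minus_sym with (x := g (x (S t))). lra. }
    eapply Rle_trans; [apply Hmono; [apply Rabs_pos|exact Hdel]|].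
    replace (2 * g (a + INR (i (S t)) * u) - 2 * g (a + INR (i t) * u)) with (2 * D) by (unfold D; ring).
    rewrite Rabs_mult, (Rabs_pos_eq 2) by lra.
    pose proof (Hconv (2 * Rabs D) (4 * eta) (/2) ltac:(pose proof (Rabs_pos D); lra) ltac:(lra) ltac:(lra)) as Hc.
    replace (/ 2 * (2 * Rabs D) + (1 - / 2) * (4 * eta)) with (Rabs D + 2 * eta) in Hc by field.
    replace (1 - / 2) with (/ 2) in Hc by field. exact Hc.
  - rewrite sumf_affine.
    assert (/ 2 * Phi (4 * eta) * INR N <= / 2).
    { assert (Phi (4 * eta) * INR N <= 1).
      { apply (Rmult_le_compat_r (INR N)) in HP4; [|lra].
        replace (1 / INR N * INR N) with 1 in HP4 by (field; lra). lra. }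
      lra. }
    lra.
Qed.
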